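(* For every dimension $d\ge 1$, $\theta^{\rm D}(1,d)=0$.
   Context: Fix integers $d\ge1$ and $1\le k\le 2d$. The directed $k$-neighbor graph ($k$-DnG) on $\mathbb{Z}^d$ is the random directed graph obtained by letting each vertex $x\in\mathbb{Z}^d$, independently of all other vertices, choose a uniformly random subset of exactly $k$ of its $2d$ nearest neighbors (in $\ell_1$-distance), and placing a directed edge from $x$ to each chosen neighbor. We write $\theta^{\rm D}(k,d)=\mathbb{P}(o\rightsquigarrow\infty \text{ in the $k$-DnG on }\mathbb{Z}^d)$, where $o$ is the origin and $o\rightsquigarrow\infty$ is the event that there is an infinite self-avoiding directed path along edges of the $k$-DnG starting at $o$ (equivalently, $o$ is connected by directed paths to vertices arbitrarily far away). *)

(* Defs.v *)
From HB Require Import structures.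
From mathcomp Require Import all_boot all_order all_algebra.
From mathcomp Require Import all_classical all_reals all_analysis.
Set Implicit Arguments. Unset Strict Implicit. Unset Printing Implicit Defensive.
Import Order.TTheory GRing.Theory Num.Theory.
Local Open Scope classical_set_scope.
Local Open Scope ring_scope.

Definition vertex (d : nat) := {ffun 'I_d -> int}.

Definition origin (d : nat) : vertex d := [ffun => 0%R].

(* The 2d nearest neighbours (in l1 distance) of x are x +/- e_i; they are
   indexed by directions (i, b) : 'I_d * bool, b = true meaning +e_i. *)
Definition dir (d : nat) := ('I_d * bool)%type.

Definition step (d : nat) (x : vertex d) (e : dir d) : vertex d :=
  [ffun j => if j == e.1 then x j + (if e.2 then 1 else -1) else x j].

(* A realisation of the choices: ch x is the set of directions chosen by x.
   There is a directed edge x -> y iff y = step x e for some e \in ch x. *)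
Definition dedge (d : nat) (ch : vertex d -> {set dir d}) (x y : vertex d) : Prop :=
  exists2 e, e \in ch x & y = step x e.

Definition reaches_infinity (d : nat) (ch : vertex d -> {set dir d}) : Prop :=
  exists p : nat -> vertex d,
    [/\ p 0%N = origin d, injective p & forall n, dedge ch (p n) (p n.+1)].

Definition is_kDnG (k d : nat) (dsp : measure_display) (T : measurableType dsp)
    (R : realType) (P : probability T R) (C : vertex d -> T -> {set dir d}) : Prop :=
  [/\ (forall x S, measurable [set w | C x w = S]),
      (forall x (S : {set dir d}), #|S| = k ->
         P [set w | C x w = S] = ((('C(2 * d, k))%:R)^-1)%:E) &
      (forall (xs : seq (vertex d)) (Ss : vertex d -> {set dir d}), uniq xs ->
         P [set w | forall x, x \in xs -> C x w = Ss x]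
         = (\prod_(x <- xs) P [set w | C x w = Ss x])%E)].

(* Main.v *)
Require Import Defs.
From HB Require Import structures.
From mathcomp Require Import all_boot all_order all_algebra.
From mathcomp Require Import all_classical all_reals all_analysis.
From mathcomp Require Import lra.
Set Implicit Arguments. Unset Strict Implicit. Unset Printing Implicit Defensive.
Import Order.TTheory GRing.Theory Num.Theory.
Local Open Scope classical_set_scope.
Local Open Scope ring_scope.

Definition flipd d (e : dir d) : dir d := (e.1, ~~ e.2).

Lemma step_flip d (x : vertex d) e : step (step x e) (flipd e) = x.
Proof.
apply/ffunP => j; rewrite !ffunE /=; case: eqP => // ->.
by case: e.2 => /=; [rewrite addrK | rewrite addrNK].
Qed.

Fixpoint all_seqs (T : finType) (n : nat) : seq (seq T) :=
  if n is n'.+1 then flatten [seq [seq e :: s | s <- all_seqs T n'] | e <- enum T]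
  else [:: [::]].

Lemma mem_all_seqs (T : finType) n s : (s \in all_seqs T n) = (size s == n).
Proof.
elim: n s => [|n IH] [|e s] //=.
- by apply/negbTE/flattenP => -[l /mapP[e' _ ->]] /mapP[s' _].
- rewrite eqSS; apply/flattenP/idP => [[l /mapP[e' _ ->]] /mapP[s' +] [_ ->] | hs].
    by rewrite IH.
  exists [seq e :: s0 | s0 <- all_seqs T n]; first by apply/mapP; exists e; rewrite ?mem_enum.
  by apply/mapP; exists s; rewrite ?IH.
Qed.

Lemma count_all_seqs (T : finType) n (p : pred (seq T)) :
  count p (all_seqs T n.+1) = \sum_(e : T) count (fun s => p (e :: s)) (all_seqs T n).
Proof.
rewrite /= count_flatten sumnE !big_map; apply: eq_bigr => e _; exact: count_map.
Qed.

Definition okw d (x : vertex d) (s : seq (dir d)) := uniq (x :: scanl (@step d) x s).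

Lemma card_dir d : #|{: dir d}| = (2 * d)%N.
Proof. by rewrite card_prod card_ord card_bool mulnC. Qed.

Lemma count_ok d n (x : vertex d) e0 :
  (count (fun s => okw x (e0 :: s)) (all_seqs _ n) <= (2 * d - 1) ^ n)%N.
Proof.
elim: n x e0 => [|n IH] x e0.
  by rewrite /= addn0; case: okw.
rewrite count_all_seqs.
set y := step x e0.
apply: (@leq_trans (\sum_(e : dir d) (if step y e != x then (2 * d - 1) ^ n else 0))%N).
  apply: leq_sum => e _.
  case: ifP => hne.
    apply: leq_trans (IH y e); apply: sub_count => s /=.
    by rewrite /okw /= => /andP[_]; rewrite -/y.
  rewrite leqn0 -(count_pred0 (all_seqs (dir d) n)); apply/eqP/eq_count => s.
  rewrite /okw /= -/y; move/negbFE: hne => /eqP ->.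
  by rewrite !inE eqxx /= orbT.
rewrite -big_mkcond /= sum_nat_const expnS leq_mul2r; apply/orP; right.
rewrite -card_dir subn1 -(cardC1 (flipd e0)); apply: subset_leq_card.
rewrite subsetE; apply/pred0P => e /=; rewrite !inE /=.
by rewrite negbK; case: eqP => // -> /=; rewrite unfold_in /y step_flip eqxx.
Qed.

Lemma count_ok_all d n :
  (count (okw (origin d)) (all_seqs _ n.+1) <= 2 * d * (2 * d - 1) ^ n)%N.
Proof.
rewrite count_all_seqs.
apply: (@leq_trans (\sum_(e : dir d) (2 * d - 1) ^ n)%N).
  by apply: leq_sum => e _; exact: count_ok.
by rewrite sum_nat_const card_dir.
Qed.

Fixpoint chosen d (ch : vertex d -> {set dir d}) (x : vertex d) (s : seq (dir d)) : bool :=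
  if s is e :: s' then (e \in ch x) && chosen ch (step x e) s' else true.

Definition okp d (ch : vertex d -> {set dir d}) s := chosen ch (origin d) s && okw (origin d) s.

Definition Bn d (ch : vertex d -> {set dir d}) n := exists s, size s = n /\ okp ch s.

Lemma chosen_cat d ch (x : vertex d) s t :
  chosen ch x (s ++ t) = chosen ch x s && chosen ch (foldl (@step d) x s) t.
Proof. by elim: s x => [|e s IH] x //=; rewrite IH andbA. Qed.

Lemma okw_cat d (x : vertex d) s t : okw x (s ++ t) -> okw x s.
Proof. by rewrite /okw scanl_cat -cat_cons cat_uniq => /andP[]. Qed.

Lemma okp_cat d ch s t : @okp d ch (s ++ t) -> okp ch s.
Proof. by rewrite /okp chosen_cat => /andP[/andP[-> _] /okw_cat]. Qed.

Lemma last_scanl d (x : vertex d) s : last x (scanl (@step d) x s) = foldl (@step d) x s.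
Proof. by elim: s x => [|e s IH] x //=. Qed.

Lemma foldl_in_scanl d (x : vertex d) s : s != [::] -> foldl (@step d) x s \in scanl (@step d) x s.
Proof. by case: s => [|e s] //= _; rewrite -last_scanl mem_last. Qed.

Lemma konig d ch : (forall n, @Bn d ch n) -> reaches_infinity ch.
Proof.
move=> hB.
pose good s := okp ch s /\ forall m, exists t, size t = m /\ okp ch (s ++ t).
have g0 : good [::] by split => // m; have [t [? ?]] := hB m; exists t.
have gS : forall s, good s -> exists e, good (rcons s e).
  move=> s [oks gs]; apply: contrapT => hn.
  have hm : forall e, exists m, forall t, size t = m -> ~ okp ch (rcons s e ++ t).
    move=> e; apply: contrapT => hc; apply: hn; exists e; split.
      apply: contrapT => hne; apply: hc; exists 0%N => -[|//] _.
      by rewrite cats0.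
    move=> m; apply: contrapT => hm; apply: hc; exists m => t ht hok.
    by apply: hm; exists t.
  have [M hM] := choice hm.
  pose Mx := (\max_(e : dir d) M e)%N.
  have [t [ht hok]] := gs Mx.+1.
  case: t ht hok => [//|e t] [ht] hok.
  have hle : (M e <= size t)%N by rewrite ht; exact: (leq_bigmax e).
  apply: (hM e (take (M e) t)); first by rewrite size_take_min; apply/minn_idPl.
  apply: (@okp_cat _ _ _ (drop (M e) t)).
  by rewrite -catA cat_take_drop cat_rcons.
have [e0 _] : exists e : dir d, True.
  have [s [hs _]] := hB 1%N; case: s hs => [|e s] // _; by exists e.
have hf : forall s, exists e, good s -> good (rcons s e).
  move=> s; case: (pselect (good s)) => hs.
    by have [e he] := gS s hs; exists e.
  by exists e0.
have [f hf'] := choice hf.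
pose g n := iter n (fun s => rcons s (f s)) [::].
have gg : forall n, good (g n) by elim => [|n IH] //=; apply: hf'.
have gpre : forall i j, (i <= j)%N -> exists t, g j = g i ++ t /\ (i < j -> t != [::])%N.
  move=> i j; elim: j => [|j IH].
    by rewrite leqn0 => /eqP ->; exists [::]; rewrite cats0.
  rewrite leq_eqVlt => /orP[/eqP -> | ]; first by exists [::]; split; [rewrite cats0 | rewrite ltnn].
  rewrite ltnS => /IH [t [ht _]]; exists (rcons t (f (g j))); split.
    by rewrite /= -/(g j) ht rcons_cat.
  by move=> _; case: t {ht}.
pose p n := foldl (@step d) (origin d) (g n).
exists p; split => //.
- move=> i j hij; apply/eqP; apply: contraT => hne.
  wlog lt : i j hij hne / (i < j)%N.
    move=> W; case: (ltngtP i j) => h; [exact: (W i j) | | by rewrite h eqxx in hne].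
    by apply: (W j i) => //; rewrite eq_sym.
  have [t [ht tn]] := gpre i j (ltnW lt).
  have := (gg j).1; rewrite /okp ht => /andP[_]; rewrite /okw scanl_cat -cat_cons cat_uniq.
  case/and3P => _ /hasPn H _.
  have := H _ (foldl_in_scanl (foldl (step (d:=d)) (origin d) (g i)) (tn lt)).
  rewrite -foldl_cat -ht -/(p j) -hij /p -last_scanl.
  by rewrite mem_last.
- move=> n; exists (f (g n)); last by rewrite /p /= foldl_rcons.
  have := (gg n.+1).1; rewrite /okp /= -cats1 chosen_cat => /andP[/andP[_ /=]].
  by rewrite andbT.
Qed.

Lemma inf_Bn d ch n : reaches_infinity ch -> @Bn d ch n.
Proof.
move=> [p [p0 pinj pe]].
have hpe : forall k, exists e, e \in ch (p k) /\ p k.+1 = step (p k) e.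
  by move=> k; have [e ? ?] := pe k; exists e.
have [u hu'] := choice hpe.
have hch : forall m k, chosen ch (p k) (map u (iota k m)).
  elim=> [|m IH] k //=; have [h1 h2] := hu' k; by rewrite h1 -h2 IH.
have hsc : forall m k, scanl (@step d) (p k) (map u (iota k m)) = map p (iota k.+1 m).
  elim=> [|m IH] k //=; have [h1 h2] := hu' k; by rewrite -h2 IH.
exists (map u (iota 0 n)); split; first by rewrite size_map size_iota.
rewrite /okp /okw -p0 hch hsc /=.
have := iota_uniq 0 n.+1; rewrite -(map_inj_uniq pinj) /=; exact.
Qed.

Local Open Scope ereal_scope.

Lemma memU (I : choiceType) (T : Type) (s : seq I) (Q : pred I) (F : I -> set T) w :
  (\big[setU/set0]_(t <- s | Q t) F t) w <-> exists t, [/\ t \in s, Q t & F t w].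
Proof.
rewrite -bigcup_seq_cond; split => [[t /andP[h1 h2] h3] | [t [h1 h2 h3]]].
  by exists t.
by exists t => //; apply/andP.
Qed.

Lemma measure_bigU_le dsp (T : measurableType dsp) (R : realType) (mu : {measure set T -> \bar R})
  (I : Type) (s : seq I) (Q : pred I) (F : I -> set T) :
  (forall t, measurable (F t)) ->
  mu (\big[setU/set0]_(t <- s | Q t) F t) <= \sum_(t <- s | Q t) mu (F t).
Proof.
move=> mF; elim: s => [|t s IH]; first by rewrite !big_nil measure0.
rewrite !big_cons; case: (Q t) => //.
apply: le_trans (measureU2 _ (mF t) (bigsetU_measurable _ _)) _ => //.
by rewrite leeD2l.
Qed.

Lemma measure_bigU_eq dsp (T : measurableType dsp) (R : realType) (mu : {measure set T -> \bar R})
  (I : eqType) (s : seq I) (F : I -> set T) :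
  uniq s -> (forall t, measurable (F t)) ->
  (forall t u, t != u -> F t `&` F u = set0) ->
  mu (\big[setU/set0]_(t <- s) F t) = \sum_(t <- s) mu (F t).
Proof.
move=> + mF dF; elim: s => [|t s IH]; first by rewrite !big_nil measure0.
rewrite /= => /andP[ts us]; rewrite !big_cons measureU //.
- by congr (_ + _); apply: IH.
- by apply: bigsetU_measurable => *.
rewrite big_distrr /= big1_seq // => u /andP[_ us']; apply: dF.
by apply: contraNneq ts => ->.
Qed.

Lemma mandb dsp (T : measurableType dsp) (a b : T -> bool) :
  measurable [set w | a w] -> measurable [set w | b w] -> measurable [set w | a w && b w].
Proof.
move=> ma mb; have -> : [set w | a w && b w] = [set w | a w] `&` [set w | b w].
  by apply/seteqP; split => w /=; [move/andP | move=> [-> ->]].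
exact: measurableI.
Qed.

Lemma mconstb dsp (T : measurableType dsp) (b : bool) : measurable [set _ : T | b].
Proof.
case: b.
  by have -> : [set _ : T | true] = setT by apply/seteqP; split.
by have -> : [set _ : T | false] = set0 by apply/seteqP; split.
Qed.

Section Model.
Context (d : nat) (R : realType) (dsp : measure_display) (T : measurableType dsp)
  (P : probability T R) (C : vertex d -> T -> {set dir d}) (hk : is_kDnG 1 P C).

Lemma mC x S : measurable [set w | C x w = S].
Proof. by case: hk. Qed.

Lemma mCb x S : measurable [set w | C x w == S].
Proof. have -> : [set w | C x w == S] = [set w | C x w = S].
  by apply/seteqP; split => w /= h; apply/eqP.
exact: mC. Qed.

Lemma mmem x e : measurable [set w | e \in C x w].
Proof.
have -> : [set w | e \in C x w] = \big[setU/set0]_(S <- index_enum {set dir d} | e \in S) [set w | C x w = S].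
  apply/seteqP; split => w /=.
    by move=> h; apply/memU; exists (C x w); rewrite mem_index_enum.
  by move/memU => [S [_ h ->]].
by apply: bigsetU_measurable => S _; exact: mC.
Qed.

Lemma mchosen s x : measurable [set w | chosen (fun y => C y w) x s].
Proof.
elim: s x => [|e s IH] x /=; first exact: mconstb.
by apply: mandb; [exact: mmem | exact: IH].
Qed.

Lemma mBn n : measurable [set w | Bn (fun y => C y w) n].
Proof.
have -> : [set w | Bn (fun y => C y w) n] =
    \big[setU/set0]_(s <- all_seqs (dir d) n) [set w | okp (fun y => C y w) s].
  apply/seteqP; split => w /=.
    by move=> [s [hs ok]]; apply/memU; exists s; rewrite mem_all_seqs hs eqxx.
  by move/memU => [s [hs _ ok]]; exists s; split => //; apply/eqP; rewrite -mem_all_seqs.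
apply: bigsetU_measurable => s _; apply: mandb; first exact: mchosen.
exact: mconstb.
Qed.

Lemma E_eq : [set w | reaches_infinity (fun x => C x w)] = \bigcap_n [set w | Bn (fun y => C y w) n].
Proof.
apply/seteqP; split => w /=.
  by move=> h n _; exact: inf_Bn.
by move=> h; apply: konig => n; exact: h.
Qed.

Lemma mE : measurable [set w | reaches_infinity (fun x => C x w)].
Proof. by rewrite E_eq; apply: bigcapT_measurable => n; exact: mBn. Qed.

End Model.

Fixpoint pairs d (x : vertex d) (s : seq (dir d)) : seq (vertex d * {set dir d}) :=
  if s is e :: s' then (x, [set e]%SET) :: pairs (step x e) s' else [::].

Definition cylb d (ch : vertex d -> {set dir d}) (l : seq (vertex d * {set dir d})) :=
  all (fun q => ch q.1 == q.2) l.

Lemma chosen_cyl d ch (x : vertex d) s : chosen ch x s ->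
  (forall y, y \in map fst (pairs x s) -> #|ch y| = 1%N) -> cylb ch (pairs x s).
Proof.
elim: s x => [|e s IH] x //= /andP[he hc] h1.
apply/andP; split; last by apply: IH => // y hy; apply: h1; rewrite inE hy orbT.
have /eqP/cards1P [a ha] := h1 x (mem_head _ _).
by move: he; rewrite ha inE => /eqP ->.
Qed.

Lemma map_pairs d (x : vertex d) s : map fst (pairs x s) = belast x (scanl (@step d) x s).
Proof. by elim: s x => [|e s IH] x //=; rewrite IH. Qed.

Lemma uniq_pairs d (x : vertex d) s : okw x s -> uniq (map fst (pairs x s)).
Proof. by rewrite /okw map_pairs lastI rcons_uniq => /andP[]. Qed.

Lemma size_pairs d (x : vertex d) s : size (pairs x s) = size s.
Proof. by elim: s x => [|e s IH] x //=; rewrite IH. Qed.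

Lemma sum_const_count (R : realType) (I : Type) (r : seq I) (Q : pred I) (c : R) :
  (\sum_(s <- r | Q s) c = c *+ count Q r)%R.
Proof.
elim: r => [|t r IH]; first by rewrite big_nil.
by rewrite big_cons /=; case: (Q t); rewrite IH // mulrS.
Qed.

Lemma lee_sum_seq (R : realType) (I : eqType) (f g : I -> \bar R) (s : seq I) (Q : pred I) :
  (forall i, i \in s -> Q i -> f i <= g i) ->
  \sum_(i <- s | Q i) f i <= \sum_(i <- s | Q i) g i.
Proof.
elim: s => [|t s IH] h; first by rewrite !big_nil.
rewrite !big_cons; case: ifP => hq.
  apply: leeD; first by apply: h; rewrite ?mem_head.
  by apply: IH => i hi; apply: h; rewrite inE hi orbT.
by apply: IH => i hi; apply: h; rewrite inE hi orbT.
Qed.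

Section Model2.
Context (d : nat) (R : realType) (dsp : measure_display) (T : measurableType dsp)
  (P : probability T R) (C : vertex d -> T -> {set dir d}) (hk : is_kDnG 1 P C).

Lemma pe x e : P [set w | C x w = [set e]%SET] = (((2 * d)%:R)^-1)%:E.
Proof. by case: hk => _ h2 _; rewrite h2 ?cards1 // bin1. Qed.

Definition Nset x := [set w | #|C x w| != 1%N].

Lemma Nset_eq x : Nset x = ~` (\big[setU/set0]_(e <- index_enum (dir d)) [set w | C x w = [set e]%SET]).
Proof.
apply/seteqP; split => w /=.
  move=> hn /memU [e [_ _ he]]; move: hn; by rewrite /Nset /= (he : C x w = _) cards1 eqxx.
move=> hn; rewrite /Nset /=. apply/negP => /cards1P [e he]; apply: hn; apply/memU; exists e.
by rewrite mem_index_enum.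
Qed.

Lemma mN x : measurable (Nset x).
Proof.
rewrite Nset_eq; apply: measurableC; apply: bigsetU_measurable => e _; exact: mC hk _ _.
Qed.

Lemma PN x : (0 < d)%N -> P (Nset x) = 0.
Proof.
move=> d0; rewrite Nset_eq probability_setC; last first.
  by apply: bigsetU_measurable => e _; exact: mC hk _ _.
rewrite measure_bigU_eq //; first last.
- move=> e e' hne; apply/seteqP; split => w //= [h1 h2].
  by move: hne; rewrite -(set1_inj (etrans (esym h1) h2)) eqxx.
- by move=> e; exact: mC hk _ _.
- exact: index_enum_uniq.
rewrite (eq_bigr (fun=> (((2 * d)%:R)^-1)%:E)); last by move=> e _; exact: pe.
rewrite sumEFin sumr_const card_dir -EFinB.
rewrite -(mulr_natr ((2 * d)%:R^-1)) mulVf; first by rewrite subrr.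
by rewrite pnatr_eq0 muln_eq0 negb_or /= -lt0n d0.
Qed.


Lemma prod_pairs (l : seq (vertex d * {set dir d})) : uniq (map fst l) ->
  P [set w | cylb (fun y => C y w) l] = \prod_(q <- l) P [set w | C q.1 w = q.2].
Proof.
move=> ul; case: hk => _ _ h3.
pose Ss (y : vertex d) : {set dir d} := nth (@finset.set0 (dir d)) (map snd l) (index y (map fst l)).
have hS : forall q, q \in l -> Ss q.1 = q.2.
  move=> q ql; rewrite /Ss.
  have il : (index q l < size l)%N by rewrite index_mem.
  have -> : q.1 = nth q.1 (map fst l) (index q l) by rewrite (nth_map q) // nth_index.
  rewrite index_uniq ?size_map // (nth_map q) // nth_index //.
have -> : [set w | cylb (fun y => C y w) l] = [set w | forall x, x \in map fst l -> C x w = Ss x].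
  apply/seteqP; split => w /=.
    move=> /allP h x /mapP [q ql ->]; rewrite hS //; exact/eqP/h.
  move=> h; apply/allP => q ql; rewrite h ?hS //; by apply/mapP; exists q.
rewrite h3 // big_map; apply: eq_big_seq => q ql; by rewrite hS.
Qed.

Lemma pcyl x s : okw x s ->
  P [set w | cylb (fun y => C y w) (pairs x s)] = ((((2 * d)%:R)^-1) ^+ size s)%:E.
Proof.
move=> ok; rewrite prod_pairs ?uniq_pairs //.
elim: s x {ok} => [|e s IH] x; first by rewrite big_nil expr0.
by rewrite /= big_cons pe IH exprS EFinM.
Qed.


Lemma mcyl l : measurable [set w | cylb (fun y => C y w) l].
Proof.
elim: l => [|q l IH] /=; first exact: mconstb.
by apply: mandb => //; exact: mCb hk _ _.
Qed.

Lemma PBn n : (0 < d)%N -> P [set w | Bn (fun y => C y w) n] <=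
  (((((2 * d)%:R)^-1) ^+ n) *+ count (okw (origin d)) (all_seqs (dir d) n))%:E.
Proof.
move=> d0.
pose cyl s := [set w | cylb (fun y => C y w) (pairs (origin d) s)].
pose Nv s := \big[setU/set0]_(y <- map fst (pairs (origin d) s)) Nset y.
have mU : forall s, measurable (cyl s `|` Nv s).
  move=> s; apply: measurableU; first exact: mcyl.
  by apply: bigsetU_measurable => y _; exact: mN.
have sub : [set w | Bn (fun y => C y w) n] `<=`
    \big[setU/set0]_(s <- all_seqs (dir d) n | okw (origin d) s) (cyl s `|` Nv s).
  move=> w [s [hs /andP [hc ok]]]; apply/memU; exists s; split => //.
    by rewrite mem_all_seqs hs.
  case: (pselect (forall y, y \in map fst (pairs (origin d) s) -> #|C y w| = 1%N)) => h.
    by left; exact: chosen_cyl.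
  right; apply/memU; apply: contrapT => hn; apply: h => y hy; apply/eqP.
  apply: contrapT => hne; apply: hn; exists y; split => //; exact/negP.
apply: le_trans (le_measure _ _ _ sub) _.
- by rewrite inE; exact: (mBn hk).
- by rewrite inE; apply: bigsetU_measurable => s _; exact: mU.
apply: le_trans (measure_bigU_le _ _ _ mU) _.
rewrite -sum_const_count -sumEFin; apply: lee_sum_seq => s hs ok.
  apply: le_trans (measureU2 _ (mcyl _) _) _.
    by apply: bigsetU_measurable => y _; exact: mN.
  have h1 : P (cyl s) <= ((((2 * d)%:R)^-1) ^+ n)%:E.
    move: hs; rewrite mem_all_seqs => /eqP <-.
    rewrite le_eqVlt; apply/orP; left; apply/eqP; exact: pcyl.
  have h0 : P (Nv s) <= 0.
    apply: le_trans (measure_bigU_le _ _ _ mN) _.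
    by rewrite big1 // => y _; exact: PN.
  by apply: le_trans (leeD h1 h0) _; rewrite adde0.
Qed.

End Model2.

Local Close Scope ereal_scope.

Lemma nat_bound m n : (n.+1 * m ^ n <= m.+1 ^ n.+1)%N.
Proof.
elim: n => [|n IH]; first by rewrite expn0 expn1 mul1n.
have h1 : (m ^ n.+1 <= m.+1 ^ n.+1)%N by rewrite leq_exp2r.
have e1 : (n.+2 * m ^ n.+1 = m ^ n.+1 + m * (n.+1 * m ^ n))%N by rewrite mulSn expnS mulnCA.
have e2 : (m.+1 ^ n.+2 = m.+1 ^ n.+1 + m * m.+1 ^ n.+1)%N by rewrite expnS mulSn.
by rewrite e1 e2 leq_add // leq_mul2l IH orbT.
Qed.

Lemma final_real (R : realType) (x : R) (N : nat) :
  0 <= x -> (forall n, x * (n.+1)%:R <= N%:R) -> x = 0.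
Proof.
move=> x0 h; apply/eqP; rewrite eq_le x0 andbT; apply/negP => /negP; rewrite -ltNge => xp.
have hb := @archi_boundP R (N%:R / x) (divr_ge0 (ler0n _ _) x0).
set k := Num.Def.archi_bound _ in hb.
have := h k; rewrite leNgt => /negP; apply.
rewrite ltr_pdivrMr // in hb.
apply: lt_le_trans hb _; rewrite mulrC; apply: ler_wpM2l; [exact: ltW | rewrite ler_nat; exact: leqnSn].
Qed.

Unset Implicit Arguments.
Local Open Scope classical_set_scope.
Local Open Scope ring_scope.

Theorem lemma2p1 (d : nat) (hd : (1 <= d)%N)
    (R : realType) (dsp : measure_display) (T : measurableType dsp)
    (P : probability T R) (C : vertex d -> T -> {set dir d}) :
  is_kDnG 1 P C ->
  P [set w | reaches_infinity (fun x => C x w)] = 0%E.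
Proof.
move=> hk.
have d0 : (0 < d)%N := hd.
have mEE := mE hk.
set E := [set w | reaches_infinity (fun x => C x w)] in mEE *.
have bound : forall n, (P E <= ((((2 * d)%:R)^-1) ^+ n.+1 *+
    count (okw (origin d)) (all_seqs (dir d) n.+1))%:E)%E.
  move=> n; apply: le_trans (PBn hk n.+1 d0).
  apply: le_measure; rewrite ?inE //; first exact: (mBn hk n.+1).
  by move=> w; exact: inf_Bn.
have x0 : (0 <= P E)%E by exact: measure_ge0.
move: x0 bound; case: (P E) => [x | | ] x0 hb //; last first.
  by have := hb 0%N.
rewrite lee_fin in x0; congr (_%:E); apply: (final_real x0) => n.
have h := hb n; rewrite lee_fin in h.
set cnt := count _ _ in h.
have hNk : 0 < ((2 * d)%:R : R) ^+ n.+1 by rewrite exprn_gt0 // ltr0n muln_gt0 d0.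
have h1 : x * ((2 * d)%:R ^+ n.+1) <= cnt%:R.
  rewrite -ler_pdivlMr //; apply: le_trans h _.
  by rewrite exprVn -mulr_natr mulrC.
have h2 : (cnt * n.+1 <= 2 * d * (2 * d) ^ n.+1)%N.
  have := count_ok_all d n; have := nat_bound (2 * d - 1) n.
  rewrite subn1 prednK ?muln_gt0 ?d0 // => a b.
  apply: leq_trans (leq_mul b (leqnn n.+1)) _.
  by rewrite -mulnA leq_mul2l (mulnC _ n.+1) a orbT.
have h2' : (cnt%:R * (n.+1)%:R <= (2 * d)%:R * ((2 * d)%:R ^+ n.+1) :> R).
  by rewrite -natrM -natrX -natrM ler_nat.
rewrite -(ler_pM2r hNk); apply: le_trans h2'.
rewrite mulrAC; apply: ler_wpM2r => //.
Qed.
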